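(* Let $G$ be a $k$-DCFG in Chomsky normal form, let $T$ be a derivation tree of $G$, and let $(v,v')$ be a pump in $T$. Let $T'$ be the tree obtained from $T$ by collapsing this pump, i.e., replacing the subtree rooted at $v$ by the subtree rooted at $v'$ (so the nodes of $T'$ are nodes of $T$). If two nodes $v_1,v_2$ form a pump in $T'$, then $v_1,v_2$ also form a pump in $T$.
   Context: Let $\Sigma$ be a finite alphabet and $1\notin\Sigma$ a separator; $\Sigma_1=\Sigma\cup\{1\}$. A $k$-DCFG $G=\langle N,\Sigma,P,S\rangle$ has a finite set $N$ of nonterminals, each with a rank in $\{0,\dots,k\}$, start symbol $S$ of rank $0$, and rules; it is in Chomsky normal form if every rule has the form $A\to B\cdot C$ or $A\to B\odot_j C$ with $j\le k$, $B,C\in N\setminus\{S\}$ (subject to the rank constraints $\mathrm{rk}(A)=\mathrm{rk}(B)+\mathrm{rk}(C)$ for $\cdot$, $\mathrm{rk}(A)=\mathrm{rk}(B)+\mathrm{rk}(C)-1$ and $\mathrm{rk}(B)\ge j$ for $\odot_j$, all ranks $\le k$), $A\to a$ with $a\in\Sigma_1$ (rank of $a$ is $1$ if $a=1$, else $0$), or $S\to\epsilon$. A derivation tree is a finite rooted ordered tree with nodes labeled by nonterminals in which each internal node labeled $A$ has exactly two children labeled $B,C$ with $A\to B\cdot C$ or $A\to B\odot_j C$ a rule of $G$, and each leaf labeled $A$ corresponds to a rule $A\to a$ or $S\to\epsilon$. The rank of a node is the rank of its label. A node $v'$ is a direct descendant of a node $v$ if $v'$ is a proper descendant of $v$ and all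 nodes on the path from $v$ to $v'$ (inclusive) have the same rank. A pump is a pair $(v,v')$ of internal nodes with the same nonterminal label such that $v'$ is a direct descendant of $v$. *)

(* Defs.v *)
From mathcomp Require Import all_boot.
Set Implicit Arguments. Unset Strict Implicit. Unset Printing Implicit Defensive.

(* Operations of binary rules: A -> B . C  (Conc)  or  A -> B (.)_j C  (Wrap j). *)
Inductive dop := Conc | Wrap of nat.

(* The rule set of a k-DCFG over alphabet Sigma with nonterminals N.
   - binr A o B C  : rule A -> B o C
   - termr A a     : rule A -> a, where a = None is the separator 1 and
                     a = Some x is the letter x of Sigma
   - epsr          : rule S -> epsilon                                        *)
Record rules (Sigma N : Type) := Rules {
  binr : N -> dop -> N -> N -> bool;
  termr : N -> option Sigma -> bool;
  epsr : bool }.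

Definition is_CNF (Sigma N : Type) (k : nat) (rk : N -> nat) (S : N)
  (P : rules Sigma N) : Prop :=
  [/\ rk S = 0,
      (forall A, rk A <= k),
      (forall A o B C, binr P A o B C ->
         [/\ B <> S, C <> S &
           match o with
           | Conc => rk A = rk B + rk C
           | Wrap j => [/\ j <= k, rk A + 1 = rk B + rk C & j <= rk B]
           end]) &
      (forall A a, termr P A a -> rk A = (if a is None then 1 else 0))].

Inductive tree (N : Type) := Leaf of N | Node of N & tree N & tree N.
Arguments Leaf {N}. Arguments Node {N}.

Definition label (N : Type) (t : tree N) : N :=
  match t with Leaf A => A | Node A _ _ => A end.

Fixpoint is_deriv (Sigma N : Type) (S : N) (P : rules Sigma N) (t : tree N)
  : Prop :=
  match t with
  | Leaf A => (exists a, termr P A a) \/ (A = S /\ epsr P)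
  | Node A l r => (exists o, binr P A o (label l) (label r))
                  /\ is_deriv S P l /\ is_deriv S P r
  end.

(* Nodes are addressed by positions: paths from the root (false = left child,
   true = right child). *)
Fixpoint subtree (N : Type) (t : tree N) (p : seq bool) : option (tree N) :=
  match p with
  | [::] => Some t
  | b :: p' => match t with
               | Leaf _ => None
               | Node _ l r => subtree (if b then r else l) p'
               end
  end.

Definition is_node (N : Type) (t : tree N) (p : seq bool) : Prop :=
  exists s, subtree t p = Some s.

Definition internal_at (N : Type) (t : tree N) (p : seq bool) (A : N) : Prop :=
  exists l r, subtree t p = Some (Node A l r).

Definition rank_at (N : Type) (rk : N -> nat) (t : tree N) (p : seq bool)
  (n : nat) : Prop :=
  exists s, subtree t p = Some s /\ rk (label s) = n.

Definition direct_desc (N : Type) (rk : N -> nat) (t : tree N)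
  (p p' : seq bool) : Prop :=
  exists q, [/\ q <> [::], p' = p ++ q &
    exists n, forall i, i <= size q -> rank_at rk t (p ++ take i q) n].

Definition pump (N : Type) (rk : N -> nat) (t : tree N) (p p' : seq bool)
  : Prop :=
  exists A, [/\ internal_at t p A, internal_at t p' A & direct_desc rk t p p'].

Fixpoint replace (N : Type) (t : tree N) (p : seq bool) (s : tree N) : tree N :=
  match p with
  | [::] => s
  | b :: p' => match t with
               | Leaf A => Leaf A
               | Node A l r => if b then Node A l (replace r p' s)
                               else Node A (replace l p' s) r
               end
  end.

Definition collapse (N : Type) (t : tree N) (v v' : seq bool) : tree N :=
  match subtree t v' with Some s => replace t v s | None => t end.

(* The node of t that a node p of (collapse t v v') is: nodes inside the
   replaced part, v ++ q, come from v' ++ q; all other nodes are unchanged. *)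
Definition orig_pos (v v' p : seq bool) : seq bool :=
  if prefix v p then v' ++ drop (size v) p else p.

(* Main.v *)
Require Import Defs.
From mathcomp Require Import all_boot.

Lemma cat_eq2 (T : Type) (x y a b : seq T) : x ++ y = a ++ b ->
  (exists c, a = x ++ c /\ y = c ++ b) \/ (exists c, x = a ++ c /\ b = c ++ y).
Proof.
elim: x a => [|z x IH] [|w a] /=.
- by move=> ->; left; exists [::].
- by move=> ->; left; exists (w :: a).
- by move=> <-; right; exists (z :: x).
- case=> -> /IH [[c [-> ->]]|[c [-> ->]]]; [left|right]; by exists c.
Qed.

Lemma take_pref (T : Type) (q : seq T) (R : seq T -> Prop) :
  (forall i, i <= size q -> R (take i q)) -> (forall a b, q = a ++ b -> R a).
Proof.
move=> H a b eq. have := H (size a). rewrite eq take_size_cat // size_cat.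
by move=> /(_ (leq_addr _ _)).
Qed.

Lemma pref_take (T : Type) (q : seq T) (R : seq T -> Prop) :
  (forall a b, q = a ++ b -> R a) -> (forall i, i <= size q -> R (take i q)).
Proof. by move=> H i _; apply: (H _ (drop i q)); rewrite cat_take_drop. Qed.

Lemma subtree_nil (N : Type) (t : tree N) : subtree t [::] = Some t.
Proof. by case: t. Qed.

Lemma subtree_cat (N : Type) (t : tree N) p q :
  subtree t (p ++ q) = obind (fun s => subtree s q) (subtree t p).
Proof. by elim: p t => [|b p IH] [A|A l r] //=; case: b. Qed.

Lemma replace_pref (N : Type) (v : seq bool) (t s t0 : tree N) :
  subtree t v = Some t0 -> forall d, subtree (replace t v s) (v ++ d) = subtree s d.
Proof.
elim: v t => [|b v IH] [A|A l r] //=; case: b => h d /=; exact: IH.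
Qed.

Lemma replace_above (N : Type) (p e : seq bool) (t s t0 : tree N) :
  subtree t p = Some t0 -> subtree (replace t (p ++ e) s) p = Some (replace t0 e s).
Proof.
elim: p t => [|b p IH] [A|A l r] //=.
- by move=> [<-]; case: e => [|[] e] //; rewrite subtree_nil.
- by move=> [<-]; case: e => [|[] e] //; rewrite subtree_nil.
- by case: b => h /=; rewrite (IH _ h).
Qed.

Lemma replace_disj (N : Type) (v p : seq bool) (t s : tree N) :
  ~~ prefix v p -> ~~ prefix p v -> subtree (replace t v s) p = subtree t p.
Proof.
elim: v p t => [|b v IH] [|c p] [A|A l r] //=.
case: b; case: c => //= h1 h2; exact: IH.
Qed.

Lemma orig_cat (v v' d : seq bool) : orig_pos v v' (v ++ d) = v' ++ d.
Proof. by rewrite /orig_pos prefix_prefix drop_size_cat. Qed.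

Lemma orig_np (v v' p : seq bool) : ~~ prefix v p -> orig_pos v v' p = p.
Proof. by rewrite /orig_pos => /negbTE ->. Qed.

Lemma prefix_size (v p : seq bool) : prefix v p -> size v <= size p.
Proof. by move=> /prefixP [x ->]; rewrite size_cat leq_addr. Qed.

Lemma rank_uniq (N : Type) (rk : N -> nat) t p n m :
  rank_at rk t p n -> rank_at rk t p m -> n = m.
Proof. by move=> [s [h1 <-]] [s' [h2 <-]]; move: h1; rewrite h2 => [[->]]. Qed.

Section Key.
Variables (N : Type) (T s : tree N) (v v' : seq bool) (A : N) (l r l2 r2 : tree N).
Hypothesis hv : subtree T v = Some (Node A l r).
Hypothesis hv' : subtree T v' = Some s.
Hypothesis hs : s = Node A l2 r2.

Lemma key p t' : subtree (replace T v s) p = Some t' ->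
  exists t0, [/\ subtree T (orig_pos v v' p) = Some t0, label t0 = label t' &
    forall B x y, t' = Node B x y -> exists x' y', t0 = Node B x' y'].
Proof.
case hp: (prefix v p).
- move/prefixP: hp => [d ->]. rewrite orig_cat (@replace_pref _ _ _ s _ hv) => h.
  exists t'; split => //; last by move=> B x y ->; exists x, y.
  by rewrite subtree_cat hv' /= h.
- rewrite orig_np ?hp //.
  case hq: (prefix p v).
  + move/prefixP: hq => [e ev].
    move: hv; rewrite ev subtree_cat.
    case ht0: (subtree T p) => [t0|] //= he.
    rewrite (@replace_above _ _ _ _ s _ ht0) => -[<-].
    case: e ev he => [|b e] ev he.
      by move: hp; rewrite ev cats0 prefix_refl.
    clear ev; case: t0 ht0 he => [B|B x y] ht0 //= he.
    exists (Node B x y); split => //=; first by clear he; case: b.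
    by move=> C x0 y0; clear he; case: b => -[<- _ _]; eauto.
  + rewrite replace_disj ?hp ?hq // => h.
    exists t'; split => //; by move=> B x y ->; exists x, y.
Qed.

Lemma key_int p B : internal_at (replace T v s) p B -> internal_at T (orig_pos v v' p) B.
Proof.
move=> [x [y /key [t0 [h1 _ h3]]]]. have [x' [y' e]] := h3 _ _ _ erefl.
by exists x', y'; rewrite h1 e.
Qed.

Lemma key_rank (rk : N -> nat) p n : rank_at rk (replace T v s) p n ->
  rank_at rk T (orig_pos v v' p) n.
Proof.
move=> [t' [/key [t0 [h1 h2 _]] <-]]; exists t0; by rewrite h1 h2.
Qed.
End Key.

Theorem lemma7 (Sigma N : finType) (k : nat) (rk : N -> nat) (S : N)
  (P : rules Sigma N) (T : tree N) (v v' v1 v2 : seq bool) :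
  is_CNF k rk S P ->
  is_deriv S P T ->
  pump rk T v v' ->
  pump rk (collapse T v v') v1 v2 ->
  pump rk T (orig_pos v v' v1) (orig_pos v v' v2).
Proof.
move=> _ _ [A [[l [r hv]] [l2 [r2 hv']] [q [qn0 ev' [m hm]]]]].
rewrite /collapse hv'.
set s := Node A l2 r2.
have hs : s = Node A l2 r2 by [].
move=> [B [i1 i2 [q2 [q2n0 ev2 [n hn]]]]].
exists B; split; try exact: (@key_int _ _ _ _ v' _ _ _ hv hv').
have hm' := @take_pref _ q (fun a => rank_at rk T (v ++ a) m) hm. have hn' := @take_pref _ q2 (fun a => rank_at rk (replace T v s) (v1 ++ a) n) hn.
have KR := @key_rank _ _ _ _ v' _ _ _ hv hv' rk.
case hp: (prefix v v1).
- move/prefixP: hp => [c ev1].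
  rewrite ev2 ev1 -catA !orig_cat.
  exists q2; split; [done | by rewrite catA | ].
  exists n => i hi. rewrite -catA -(orig_cat v). apply: KR.
  by rewrite catA -ev1; apply: hn.
case hp2: (prefix v v2).
- move/prefixP: hp2 => [d ev2'].
  move: (ev2'); rewrite {1}ev2 => /cat_eq2 [[c [ev eq2]]|[c [ev1 _]]]; last first.
    by move: hp; rewrite ev1 prefix_prefix.
  have cn0 : c <> [::] by move=> c0; move: hp; rewrite ev c0 cats0 prefix_refl.
  rewrite ev2' orig_cat (@orig_np _ v' _ (negbT hp)) ev'.
  have rv : rank_at rk T v n.
    have h := hn' c d eq2. rewrite -ev in h.
    have := KR (v ++ [::]) n; rewrite orig_cat !cats0 => /(_ h) h2.
    have h3 := hm' q [::] (esym (cats0 q)). rewrite -ev' in h3.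
    have h4 := hm' [::] q erefl. rewrite cats0 in h4.
    by rewrite -(@rank_uniq _ _ _ _ _ _ h3 h2).
  have mn : m = n.
    have := hm' [::] q erefl; rewrite cats0 => h; exact: (@rank_uniq _ _ _ _ _ _ h rv).
  exists (c ++ q ++ d); split.
  + by case: (c) cn0.
  + by rewrite ev !catA.
  + exists n; apply: (@pref_take _ _ (fun a => rank_at rk T (v1 ++ a) n)) => a b /cat_eq2 [[c1 [ea eqd]]|[c1 [ec eb]]].
    * move: eqd => /cat_eq2 [[c2 [ec1 ed]]|[c2 [eq ec1]]].
      -- have := hn' (c ++ c2) b. rewrite eq2 ed catA => /(_ erefl).
         rewrite catA -ev => /KR. rewrite orig_cat ev' ea ec1 !catA ev.
         by rewrite -!catA.
      -- have := hm' c1 c2 eq. rewrite mn ea catA -ev.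
         by [].
    * case: c1 ec eb => [|x c1] ec eb.
        by move: rv; rewrite ev ec cats0.
      have := hn' a (x :: c1 ++ d). rewrite eq2 ec -catA /= => /(_ erefl) /KR.
      rewrite orig_np //. apply/negP => /prefix_size.
      by rewrite ev ec !size_cat /= addnA addnS ltnNge leq_addr.
- rewrite !orig_np ?hp ?hp2 //.
  exists q2; split => //; exists n => i hi.
  have := hn i hi => /KR. rewrite orig_np //. apply/negP => hh.
  move: hp2; rewrite ev2 (prefix_trans hh) //.
  by rewrite -{2}(cat_take_drop i q2) catA prefix_prefix.
Qed.
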